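(* Let $X$ be a fibrewise locally equiconnected space over $B$ and let $f:X\to[0,1]$ be a continuous map such that $A:=f^{-1}(\{0\})$ is a fibrewise retract of $f^{-1}([0,1))$. Then $(X,A)$ is a closed fibrewise cofibred pair.
   Context: A fibrewise space over $B$ is a space $X$ with $p_X:X\to B$; subsets carry the restricted projection; fibrewise maps satisfy $p_Y\circ f=p_X$. $A\subseteq V$ is a fibrewise retract of $V$ if there is a fibrewise map $r:V\to A$ with $r|_A=1_A$. A fibrewise cofibration is a fibrewise map with the homotopy extension property with respect to fibrewise maps and fibrewise homotopies (homotopies $H$ with $p(H(x,t))=p(x)$); closed if also a closed embedding. $(X,A)$ is a closed fibrewise cofibred pair if the inclusion $A\hookrightarrow X$ is a closed fibrewise cofibration. $X$ is fibrewise locally equiconnected if the diagonal $X\to X\times_BX=\{(x,y):p_X(x)=p_X(y)\}$ is a closed fibrewise cofibration. *)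

(* Defs.v *)
From HB Require Import structures.
From mathcomp Require Import all_boot all_order all_algebra.
From mathcomp Require Import all_classical all_reals all_analysis.
Import numFieldNormedType.Exports.
Set Implicit Arguments. Unset Strict Implicit. Unset Printing Implicit Defensive.
Import Order.TTheory GRing.Theory Num.Theory.
Local Open Scope classical_set_scope.
Local Open Scope ring_scope.

(* The unit interval [0,1] of a real type, as a set and (via set_type, which
   carries the subspace topology) as a topological space. *)
Definition unit_interval (R : realType) : set R := `[0, 1].

Definition fibrewise {B X Y : Type} (pX : X -> B) (pY : Y -> B) (f : X -> Y) :=
  forall x, pY (f x) = pX x.

Definition fibrewise_homotopy (R : realType) {B : Type} {X Y : topologicalType}
  (pX : X -> B) (pY : Y -> B) (H : X * set_type (@unit_interval R) -> Y) :=
  continuous H /\ forall x t, pY (H (x, t)) = pX x.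

Definition fibrewise_cofibration (R : realType) {B A X : topologicalType}
  (pA : A -> B) (pX : X -> B) (i : A -> X) : Prop :=
  [/\ continuous i, fibrewise pA pX i &
    forall (Y : topologicalType) (pY : Y -> B), continuous pY ->
    forall (g : X -> Y) (h : A * set_type (@unit_interval R) -> Y),
      continuous g -> fibrewise pX pY g ->
      fibrewise_homotopy pA pY h ->
      (forall a t, set_val t = 0 -> h (a, t) = g (i a)) ->
      exists H : X * set_type (@unit_interval R) -> Y,
        [/\ fibrewise_homotopy pX pY H,
            (forall x t, set_val t = 0 -> H (x, t) = g x) &
            (forall a t, H (i a, t) = h (a, t))]].

Definition closed_embedding {A X : topologicalType} (i : A -> X) : Prop :=
  [/\ continuous i, injective i & forall C : set A, closed C -> closed (i @` C)].

Definition closed_fibrewise_cofibration (R : realType) {B A X : topologicalType}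
  (pA : A -> B) (pX : X -> B) (i : A -> X) : Prop :=
  closed_embedding i /\ fibrewise_cofibration R pA pX i.

Definition closed_fibrewise_cofibred_pair (R : realType) {B X : topologicalType}
  (pX : X -> B) (A : set X) : Prop :=
  closed_fibrewise_cofibration R (fun a : set_type A => pX (set_val a)) pX set_val.

Definition fibprod {B X : Type} (pX : X -> B) : set (X * X) :=
  [set p | pX p.1 = pX p.2].

Definition fibprod_proj {B X : topologicalType} (pX : X -> B)
  (p : set_type (fibprod pX)) : B := pX (set_val p).1.

Lemma diag_in_fibprod {B X : Type} (pX : X -> B) (x : X) : (x, x) \in fibprod pX.
Proof. by apply/mem_set. Qed.

Definition fib_diagonal {B X : topologicalType} (pX : X -> B) (x : X)
  : set_type (fibprod pX) := exist _ (x, x) (diag_in_fibprod pX x).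

Definition fibrewise_LEC (R : realType) {B X : topologicalType} (pX : X -> B) :=
  closed_fibrewise_cofibration R pX (@fibprod_proj B X pX) (@fib_diagonal B X pX).

Definition fibrewise_retract {B X : topologicalType} (pX : X -> B) (A V : set X) :=
  A `<=` V /\
  exists r : set_type V -> set_type A,
    [/\ continuous r,
        (forall v, pX (set_val (r v)) = pX (set_val v)) &
        (forall v, A (set_val v) -> set_val (r v) = set_val v)].

(* Main.v *)
Require Import Defs.
From HB Require Import structures.
From mathcomp Require Import all_boot all_order all_algebra.
From mathcomp Require Import all_classical all_reals all_analysis.
From mathcomp Require Import ring lra.
Import numFieldNormedType.Exports.
Import Order.TTheory GRing.Theory Num.Theory.
Local Open Scope classical_set_scope.
Local Open Scope ring_scope.

Unset Implicit Arguments. Set Strict Implicit.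
Section gen.
Context {T U V : topologicalType}.

Lemma cont_pair (f : T -> U) (g : T -> V) x :
  {for x, continuous f} -> {for x, continuous g} ->
  {for x, continuous (fun y => (f y, g y))}.
Proof. by move=> cf cg; apply: cvg_pair. Qed.

Lemma cont_fst : continuous (@fst U V).
Proof. by move=> p; apply: cvg_fst. Qed.

Lemma cont_snd : continuous (@snd U V).
Proof. by move=> p; apply: cvg_snd. Qed.

Lemma cont_val (A : set U) : continuous (@set_val U A).
Proof. exact: initial_continuous. Qed.

Lemma cont_into_sub (A : set U) (f : T -> set_type A) x :
  {for x, continuous (set_val \o f)} -> {for x, continuous f}.
Proof.
move=> cf W [B] [] [Op oO <-] Ofx BW; apply: (filterS BW); apply: cf.
exact: open_nbhs_nbhs.
Qed.

Lemma cont_loc (f g : T -> U) x :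
  (\forall y \near x, g y = f y) -> {for x, continuous f} ->
  {for x, continuous g}.
Proof.
move=> e cf; have ex : g x = f x := nbhs_singleton e.
rewrite /prop_for /continuous_at ex.
apply: cvg_trans cf; apply: near_eq_cvg; apply: filterS e => y ->. done.
Qed.

Lemma cont_two (g f1 f2 : T -> U) x :
  {for x, continuous f1} -> {for x, continuous f2} ->
  f1 x = g x -> f2 x = g x -> (forall y, g y = f1 y \/ g y = f2 y) ->
  {for x, continuous g}.
Proof.
move=> c1 c2 e1 e2 h N Ngx.
have n1 : nbhs x (f1 @^-1` N) by apply: c1; rewrite e1.
have n2 : nbhs x (f2 @^-1` N) by apply: c2; rewrite e2.
apply: filterS (filterI n1 n2) => y [a b] /=; by case: (h y) => ->.
Qed.

End gen.

Section gen2.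
Context {U V : topologicalType}.
Lemma nbhs_sub_val (A : set U) (a : set_type A) (W : set (set_type A)) :
  nbhs a W -> exists O : set U, [/\ open O, O (set_val a) & forall b, O (set_val b) -> W b].
Proof.
move=> [B] [] [Op oO <-] Ofx BW; exists Op; split => // b Ob; exact: BW.
Qed.

Lemma nbhs_prod_split (p : U * V) (W : set (U * V)) : nbhs p W ->
  exists W1 W2, [/\ nbhs p.1 W1, nbhs p.2 W2 & forall a b, W1 a -> W2 b -> W (a, b)].
Proof.
case=> -[W1 W2] /= [n1 n2] sub; exists W1, W2; split => // a b h1 h2; exact: sub.
Qed.

Lemma nbhs_prod_mk (p : U * V) (W1 : set U) (W2 : set V) :
  nbhs p.1 W1 -> nbhs p.2 W2 -> nbhs p [set q | W1 q.1 /\ W2 q.2].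
Proof.
move=> n1 n2; exists (W1, W2) => //= -[a b] /= [h1 h2]; by split.
Qed.
End gen2.

Unset Implicit Arguments. Set Strict Implicit.
Section I.
Context {R : realType}.
Local Notation I := (set_type (@unit_interval R)).
Lemma memI1 (r : R) : r \in @unit_interval R -> 0 <= r <= 1.
Proof. move/set_mem. rewrite /unit_interval /=. move=> h. have := h. rewrite itv_boundlr. by []. Qed.
Lemma memI2 (r : R) : 0 <= r <= 1 -> r \in @unit_interval R.
Proof. by move=> h; apply: mem_set; rewrite /unit_interval /= itv_boundlr. Qed.

Lemma valI (t : I) : 0 <= set_val t <= 1.
Proof. by case: t => x h; apply: memI1. Qed.
Lemma valI0 (t : I) : 0 <= set_val t.
Proof. by case/andP: (valI t). Qed.
Lemma valI1 (t : I) : set_val t <= 1.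
Proof. by case/andP: (valI t). Qed.
Lemma I_inj (s t : I) : set_val s = set_val t -> s = t.
Proof. by move=> e; apply: eq_sig_hprop. Qed.

Definition clampR (r : R) : R := Num.min 1 (Num.max 0 r).
Lemma clampR_in (r : R) : 0 <= clampR r <= 1.
Proof.
rewrite /clampR; apply/andP; split.
  by rewrite le_min ler01 le_max lexx.
by rewrite ge_min lexx.
Qed.
Definition clamp (r : R) : I := exist _ (clampR r) (@memI2 (clampR r) (clampR_in r)).
Lemma valclamp (r : R) : set_val (clamp r) = clampR r.
Proof. by []. Qed.
Lemma clampE (r : R) : 0 <= r <= 1 -> set_val (clamp r) = r.
Proof.
case/andP=> h0 h1; rewrite valclamp /clampR.
by rewrite (max_idPr h0) (min_idPr h1).
Qed.
Lemma clamp_le0 (r : R) : r <= 0 -> set_val (clamp r) = 0.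
Proof. by move=> h; rewrite valclamp /clampR (max_idPl h) (min_idPr ler01). Qed.
Lemma clamp_ge1 (r : R) : 1 <= r -> set_val (clamp r) = 1.
Proof.
move=> h; rewrite valclamp /clampR (max_idPr (le_trans ler01 h)).
by rewrite (min_idPl h).
Qed.
Lemma clamp_val (t : I) : clamp (set_val t) = t.
Proof. by apply: I_inj; rewrite clampE // valI. Qed.
Lemma clamp_pos (r : R) : 0 < set_val (clamp r) -> 0 < r.
Proof.
move=> h; rewrite ltNge; apply/negP => /clamp_le0 e; by rewrite e ltxx in h.
Qed.

Lemma cont_clampR : continuous clampR.
Proof.
move=> x; rewrite /clampR.
have -> : (fun r : R => Num.min 1 (Num.max 0 r)) =
   ((fun _ : R^o => (1 : R^o)) \min ((fun _ : R^o => (0 : R^o)) \max id)) by [].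
apply: continuous_min; first exact: cst_continuous.
by apply: continuous_max; [exact: cst_continuous|exact: cvg_id].
Qed.

Lemma cont_clamp : continuous clamp.
Proof. move=> x; apply: cont_into_sub; exact: cont_clampR. Qed.
End I.

Unset Implicit Arguments. Set Strict Implicit.
Section tube.
Context {R : realType} {T Y : topologicalType}.
Local Notation I := (set_type (@unit_interval R)).

Lemma tube (P : T -> I -> Y) (a : T) (y0 : Y) :
  (forall s, P a s = y0) ->
  (forall s, {for (a, s), continuous (fun p => P p.1 p.2)}) ->
  forall N, nbhs y0 N -> \forall x \near a, forall s, N (P x s).
Proof.
move=> Pa cP N nN.
have cpt : compact (@unit_interval R) by exact: segment_compact.
have := (compact_near_coveringP _).1 cpt T (nbhs a)
   (fun x r => N (P x (clamp r))) _.
have cov : forall r, @unit_interval R r ->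
    \forall r' \near r & x \near a, N (P x (clamp r')).
  move=> r _.
  have cg : {for (r, a), continuous (fun q : R * T => P q.2 (clamp q.1))}.
    apply: (@continuous_comp _ _ _ (fun q : R * T => (q.2, clamp q.1))
              (fun p => P p.1 p.2)).
      apply: cont_pair; first exact: cont_snd.
      apply: (@continuous_comp _ _ _ fst clamp); [exact: cont_fst|exact: cont_clamp].
    exact: cP.
  apply: cg; by rewrite /= Pa.
move=> /(_ _ cov) H.
apply: filterS H => x Hx s.
rewrite -(clamp_val s); apply: Hx.
have := valI s; by rewrite /unit_interval /= itv_boundlr.
Qed.
End tube.

Unset Implicit Arguments. Set Strict Implicit.
Section LEC.
Context {R : realType} {B X : topologicalType} (pX : X -> B) (cpX : continuous pX).
Local Notation I := (set_type (@unit_interval R)).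
Local Notation Z := (set_type (fibprod pX)).

Lemma fibprodP (z : Z) : pX (set_val z).1 = pX (set_val z).2.
Proof. by case: z => [[x y] /= /set_mem]. Qed.

Definition SS : set (Z * I) :=
  [set p | set_val p.2 = 0 \/ (set_val p.1).1 = (set_val p.1).2].

Lemma LEC_data : fibrewise_LEC R pX ->
  exists lam : Z -> I -> X * X, exists gap : Z -> I -> R,
 [/\ continuous (fun p : Z * I => lam p.1 p.2),
     continuous (fun p : Z * I => gap p.1 p.2),
     (forall z t, 0 < gap z t -> (lam z t).1 = (lam z t).2),
     (forall z t, pX (lam z t).1 = pX (set_val z).1 /\ pX (lam z t).2 = pX (set_val z).1) &
    [/\ (forall z t, set_val t = 0 -> lam z t = set_val z),
     (forall x t, lam (fib_diagonal pX x) t = (x, x)) &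
     (forall x t, gap (fib_diagonal pX x) t = set_val t)]].
Proof.
case=> _ [_ _ hep].
pose Yt := set_type SS.
pose pYt (y : Yt) : B := fibprod_proj (set_val y).1.
have cpYt : continuous pYt.
  move=> y; rewrite /pYt /fibprod_proj.
  apply: (@continuous_comp _ _ _ (fun y : Yt => (set_val (set_val y).1).1) pX); last exact: cpX.
  apply: (@continuous_comp _ _ _ (fun y : Yt => (set_val (set_val y).1)) fst); last exact: cont_fst.
  apply: (@continuous_comp _ _ _ (fun y : Yt => (set_val y).1) set_val); last exact: cont_val.
  apply: (@continuous_comp _ _ _ set_val fst); [exact: cont_val|exact: cont_fst].
have g0P : forall z : Z, (z, clamp 0) \in SS.
  by move=> z; apply: mem_set; left; rewrite clamp_le0.
pose g0 (z : Z) : Yt := exist _ (z, clamp 0) (g0P z).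
have h0P : forall p : X * I, (fib_diagonal pX p.1, p.2) \in SS.
  by move=> p; apply: mem_set; right.
pose h0 (p : X * I) : Yt := exist _ (fib_diagonal pX p.1, p.2) (h0P p).
have cg0 : continuous g0.
  move=> z; apply: cont_into_sub => /=.
  apply: cont_pair; [exact: cvg_id|exact: cst_continuous].
have cdiag : continuous (fib_diagonal pX).
  move=> x; apply: cont_into_sub => /=.
  by apply: cont_pair; exact: cvg_id.
have ch0 : continuous h0.
  move=> p; apply: cont_into_sub => /=.
  apply: cont_pair; last exact: cont_snd.
  apply: (@continuous_comp _ _ _ fst (fib_diagonal pX)); [exact: cont_fst|exact: cdiag].
have fg0 : fibrewise (@fibprod_proj B X pX) pYt g0 by [].
have fh0 : fibrewise_homotopy pX pYt h0 by split.
have comp : forall a t, set_val t = 0 -> h0 (a, t) = g0 (fib_diagonal pX a).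
  move=> a t t0; have -> : t = clamp 0 by apply: I_inj; rewrite t0 clamp_le0.
  by apply: eq_sig_hprop.
have [Hd [[cHd fHd] H0 Hdiag]] := hep Yt pYt cpYt g0 h0 cg0 fg0 fh0 comp.
exists (fun z t => set_val (set_val (Hd (z, t))).1).
exists (fun z t => set_val (set_val (Hd (z, t))).2).
have cHd' : continuous (fun p : Z * I => Hd (p.1, p.2)).
  move=> p; apply: (@continuous_comp _ _ _ (fun p : Z * I => (p.1, p.2)) Hd); last exact: cHd.
  by apply: cont_pair; [exact: cont_fst|exact: cont_snd].
split.
- move=> p; apply: (@continuous_comp _ _ _ (fun p : Z * I => (set_val (Hd (p.1, p.2))).1) set_val); last exact: cont_val.
  apply: (@continuous_comp _ _ _ (fun p : Z * I => (set_val (Hd (p.1, p.2)))) fst); last exact: cont_fst.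
  apply: (@continuous_comp _ _ _ (fun p : Z * I => Hd (p.1, p.2)) set_val); [exact: cHd'|exact: cont_val].
- move=> p; apply: (@continuous_comp _ _ _ (fun p : Z * I => (set_val (Hd (p.1, p.2))).2) set_val); last exact: cont_val.
  apply: (@continuous_comp _ _ _ (fun p : Z * I => (set_val (Hd (p.1, p.2)))) snd); last exact: cont_snd.
  apply: (@continuous_comp _ _ _ (fun p : Z * I => Hd (p.1, p.2)) set_val); [exact: cHd'|exact: cont_val].
- move=> z t; case: (Hd (z, t)) => [[w s] hs] /=.
  by move/set_mem: hs => [->|->] //; rewrite ltxx.
- move=> z t; have e := fHd z t; rewrite /pYt /fibprod_proj /= in e.
  by split; [exact: e| rewrite -fibprodP; exact: e].
- split.
  + by move=> z t t0; rewrite H0.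
  + by move=> x t; rewrite Hdiag.
  + by move=> x t; rewrite Hdiag.
Qed.
End LEC.

Set Implicit Arguments. Unset Strict Implicit.
Section realfun.
Context {R : realType} {T U : topologicalType}.
Implicit Types f g c : T -> R.

Lemma rc_add f g x : {for x, continuous f} -> {for x, continuous g} ->
  {for x, continuous (fun y => f y + g y)}.
Proof. by move=> cf cg; apply: cvgD. Qed.
Lemma rc_sub f g x : {for x, continuous f} -> {for x, continuous g} ->
  {for x, continuous (fun y => f y - g y)}.
Proof. by move=> cf cg; apply: cvgB. Qed.
Lemma rc_mul f g x : {for x, continuous f} -> {for x, continuous g} ->
  {for x, continuous (fun y => f y * g y)}.
Proof. by move=> cf cg; apply: cvgM. Qed.
Lemma rc_cst (k : R) x : {for x, continuous (fun _ : T => k)}.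
Proof. exact: cst_continuous. Qed.
Lemma rc_min f g x : {for x, continuous f} -> {for x, continuous g} ->
  {for x, continuous (fun y => Num.min (f y) (g y))}.
Proof. by move=> cf cg; apply: (@continuous_min R T f g). Qed.
Lemma rc_max f g x : {for x, continuous f} -> {for x, continuous g} ->
  {for x, continuous (fun y => Num.max (f y) (g y))}.
Proof. by move=> cf cg; apply: (@continuous_max R T f g). Qed.
Lemma rc_inv f x : f x != 0 -> {for x, continuous f} ->
  {for x, continuous (fun y => (f y)^-1)}.
Proof. move=> h cf; exact: (@cvgV R T (nbhs x) _ f (f x) h cf). Qed.

Lemma near_lt c x thr : {for x, continuous c} -> c x < thr ->
  \forall y \near x, c y < thr.
Proof. by move=> cc h; exact: (cc _ (lt_nbhsl h)). Qed.
Lemma near_gt c x thr : {for x, continuous c} -> thr < c x ->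
  \forall y \near x, thr < c y.
Proof. by move=> cc h; exact: (cc _ (lt_nbhsr h)). Qed.

Lemma cont_if c (f1 f2 : T -> U) x thr :
  {for x, continuous c} -> {for x, continuous f1} -> {for x, continuous f2} ->
  (c x = thr -> f1 x = f2 x) ->
  {for x, continuous (fun y => if c y <= thr then f1 y else f2 y)}.
Proof.
move=> cc c1 c2 e.
have [lt|gt|eq] := ltgtP (c x) thr.
- apply: (@cont_loc _ _ f1 _ x _ c1); apply: filterS (near_lt cc lt : \forall y \near x, c y < thr) => y /ltW ->. done.
- apply: (@cont_loc _ _ f2 _ x _ c2); apply: filterS (near_gt cc gt : \forall y \near x, thr < c y) => y.
  by rewrite leNgt => ->.
- apply: (@cont_two _ _ _ f1 f2 x c1 c2); first by rewrite eq lexx.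
  + by rewrite eq lexx e.
  + by move=> y; case: (c y <= thr); [left|right].
Qed.
End realfun.

Set Implicit Arguments. Unset Strict Implicit.
Section main.
Context {R : realType} {B X : topologicalType} (pX : X -> B) (cpX : continuous pX).
Local Notation I := (set_type (@unit_interval R)).
Local Notation Z := (set_type (fibprod pX)).
Context (f : X -> I) (cf : continuous f).
Local Notation A := [set x | set_val (f x) = 0].
Local Notation V := [set x | set_val (f x) < 1].
Context (r : set_type V -> set_type A)
  (cr : continuous r) (rF : forall v, pX (set_val (r v)) = pX (set_val v))
  (rA : forall v, A (set_val v) -> set_val (r v) = set_val v).

Definition fv (x : X) : R := set_val (f x).
Lemma cfv : continuous fv.
Proof. move=> x; apply: continuous_comp; [exact: cf|exact: cont_val]. Qed.
Lemma fv01 x : 0 <= fv x <= 1.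
Proof. exact: valI. Qed.

Lemma openV : open V.
Proof.
have -> : V = fv @^-1` [set y | y < 1] by [].
by apply: open_comp; [move=> x _; exact: cfv | exact: open_lt].
Qed.

Lemma closedA : closed A.
Proof.
have -> : A = fv @^-1` [set y | y = 0] by [].
by apply: preimage_closed; [move=> x _; exact: cfv | exact: closed_eq].
Qed.

Definition rr (x : X) : X :=
  match pselect (V x) with
  | left h => set_val (r (exist _ x (mem_set h)))
  | right _ => x
  end.

Lemma rr_fib x : pX (rr x) = pX x.
Proof. rewrite /rr; case: pselect => // h; by rewrite rF. Qed.

Lemma rr_A x : V x -> A (rr x).
Proof.
rewrite /rr; case: pselect => // h _.
by case: (r (exist _ x (mem_set h))) => y /= hy; apply: set_mem.
Qed.

Lemma rr_id a : A a -> rr a = a.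
Proof.
move=> Aa; rewrite /rr; case: pselect => [h|]; first by rewrite rA.
by rewrite /= Aa ltr01.
Qed.

Lemma rr_cont x : V x -> {for x, continuous rr}.
Proof.
move=> Vx.
have : {within V, continuous rr}.
  apply/subspace_sigL_continuousP.
  have -> : sigL V rr = set_val \o r.
    apply/funext => -[y hy] /=; rewrite /sigL /= /rr.
    case: pselect => [h|nV]; last by exfalso; apply: nV; apply: set_mem.
    by congr (set_val (r _)); apply: eq_sig_hprop.
  move=> v; apply: continuous_comp; [exact: cr|exact: cont_val].
rewrite continuous_open_subspace; last exact: openV.
by move=> /(_ x (mem_set Vx)).
Qed.

Context (lam : Z -> I -> X * X) (gap : Z -> I -> R)
  (clam : continuous (fun p : Z * I => lam p.1 p.2))
  (cgap : continuous (fun p : Z * I => gap p.1 p.2))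
  (lamD : forall z t, 0 < gap z t -> (lam z t).1 = (lam z t).2)
  (lamF : forall z t, pX (lam z t).1 = pX (set_val z).1 /\ pX (lam z t).2 = pX (set_val z).1)
  (lam0 : forall z t, set_val t = 0 -> lam z t = set_val z)
  (lamd : forall x t, lam (fib_diagonal pX x) t = (x, x))
  (gapd : forall x t, gap (fib_diagonal pX x) t = set_val t).

Definition ez (x : X) : Z := exist _ (x, rr x) (mem_set (esym (rr_fib x) : fibprod pX (x, rr x))).

Lemma ez_cont x : V x -> {for x, continuous ez}.
Proof.
move=> Vx; apply: cont_into_sub.
by apply: (@cont_pair _ _ _ id rr); [exact: cvg_id|exact: rr_cont].
Qed.

Lemma ez_diag a : A a -> ez a = fib_diagonal pX a.
Proof.
move=> Aa; apply: eq_sig_hprop; first by move=> *; exact: Prop_irrelevance.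
by rewrite /= rr_id.
Qed.

Lemma lamc {T : topologicalType} (z : T -> Z) (tau : T -> I) x :
  {for x, continuous z} -> {for x, continuous tau} ->
  {for x, continuous (fun y => lam (z y) (tau y))}.
Proof.
move=> cz ct.
apply: (@continuous_comp _ _ _ (fun y => (z y, tau y)) (fun p : Z * I => lam p.1 p.2)).
  exact: cont_pair.
exact: clam.
Qed.

Lemma gapc {T : topologicalType} (z : T -> Z) (tau : T -> I) x :
  {for x, continuous z} -> {for x, continuous tau} ->
  {for x, continuous (fun y => gap (z y) (tau y))}.
Proof.
move=> cz ct.
apply: (@continuous_comp _ _ _ (fun y => (z y, tau y)) (fun p : Z * I => gap p.1 p.2)).
  exact: cont_pair.
exact: cgap.
Qed.

Definition u (x : X) : R := gap (ez x) (clamp 1).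

Lemma u_cont x : V x -> {for x, continuous u}.
Proof. move=> Vx; apply: gapc; [exact: ez_cont|exact: cst_continuous]. Qed.

Lemma u_A a : A a -> u a = 1.
Proof. by move=> Aa; rewrite /u ez_diag // gapd clampE // lexx ler01. Qed.

Definition kap (x : X) : R := Num.max 0 (Num.min (u x) (1 - 2 * fv x)).

Lemma kap_le1 x : kap x <= 1.
Proof.
rewrite /kap ge_max ler01 /= ge_min; apply/orP; right.
by rewrite lerBlDr lerDl mulr_ge0 //; case/andP: (fv01 x).
Qed.

Lemma kap_ge0 x : 0 <= kap x.
Proof. by rewrite /kap le_max lexx. Qed.

Lemma kap_pos x : 0 < kap x -> [/\ V x, 0 < u x & fv x < 1 / 2].
Proof.
rewrite /kap lt_max ltxx /= lt_min => /andP [h1 h2].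
have h3 : fv x < 1 / 2.
  by rewrite subr_gt0 -ltr_pdivlMl // mulrC in h2.
split => //; apply: (lt_trans h3); by rewrite ltr_pdivrMr // mul1r ltr1n.
Qed.

Lemma kap_A a : A a -> kap a = 1.
Proof.
move=> Aa; rewrite /kap u_A //; have -> : fv a = 0 by [].
by rewrite mulr0 subr0 minxx (max_idPr ler01).
Qed.

Lemma kap_cont : continuous kap.
Proof.
move=> x.
have [Vx|nVx] := pselect (V x).
  rewrite /kap; apply: (@rc_max R X (fun _ => 0) (fun y => Num.min (u y) (1 - 2 * fv y)) x); first exact: rc_cst.
  apply: rc_min; first exact: u_cont.
  apply: rc_sub; first exact: rc_cst.
  by apply: rc_mul; [exact: rc_cst|exact: cfv].
have fx1 : fv x = 1.
  by apply/eqP; rewrite eq_le; case/andP: (fv01 x) => _ ->; rewrite leNgt; apply/negP.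
have h : 1 / 2 < fv x by rewrite fx1 ltr_pdivrMr // mul1r ltr1n.
apply: (@cont_loc _ _ (fun _ => 0) _ x); last exact: rc_cst.
have := near_gt (@cfv x) h; apply: filterS => y hy.
apply/max_idPl; rewrite ge_min; apply/orP; right.
by rewrite subr_le0 -ler_pdivrMl // mulrC ltW.
Qed.

Definition phi (x : X) : R := Num.min 1 (fv x + 2 * (1 - kap x)).

Lemma phi_ge0 x : 0 <= phi x.
Proof.
rewrite /phi le_min ler01 /= addr_ge0 //; first by case/andP: (fv01 x).
by rewrite mulr_ge0 // subr_ge0 kap_le1.
Qed.

Lemma phi_A a : A a -> phi a = 0.
Proof.
move=> Aa; rewrite /phi kap_A //; have -> : fv a = 0 by [].
by rewrite subrr mulr0 addr0 (min_idPr ler01).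
Qed.

Lemma phi_pos x : ~ A x -> 0 < phi x.
Proof.
move=> nA; have fp : 0 < fv x.
  rewrite lt_def; case/andP: (fv01 x) => -> _; rewrite andbT.
  by apply/eqP => e; apply: nA; rewrite /= -e.
rewrite /phi lt_min ltr01 /=; apply: (lt_le_trans fp).
by rewrite lerDl mulr_ge0 // subr_ge0 kap_le1.
Qed.

Lemma phi_lt1 x : phi x < 1 -> 1 / 2 < kap x.
Proof.
rewrite /phi gt_min ltxx /= => h.
have h2 : 2 * (1 - kap x) < 1.
  apply: le_lt_trans h; rewrite lerDr; by case/andP: (fv01 x).
rewrite ltr_pdivrMr // -subr_gt0; rewrite -subr_gt0 in h2.
by rewrite (_ : kap x * 2 - 1 = 1 - 2 * (1 - kap x)) // mulrBr mulr1; ring.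
Qed.

Lemma phi_cont : continuous phi.
Proof.
move=> x; rewrite /phi.
apply: (@rc_min R X (fun _ => 1) (fun y => fv y + 2 * (1 - kap y)) x); first exact: rc_cst.
apply: rc_add; first exact: cfv.
apply: (@rc_mul R X (fun _ => 2) (fun y => 1 - kap y) x); first exact: rc_cst.
apply: (@rc_sub R X (fun _ => 1) kap x); [exact: rc_cst|exact: kap_cont].
Qed.

Definition gam (x : X) : R := clampR (4 * kap x - 1).

Lemma gam_cont : continuous gam.
Proof.
move=> x; rewrite /gam.
apply: (@continuous_comp _ _ _ (fun y => 4 * kap y - 1) clampR); last exact: cont_clampR.
apply: (@rc_sub R X (fun y => 4 * kap y) (fun _ => 1) x); last exact: rc_cst.
apply: (@rc_mul R X (fun _ => 4) kap x); [exact: rc_cst|exact: kap_cont].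
Qed.

Lemma gam1 x : 1 / 2 < kap x -> gam x = 1.
Proof. move=> h; rewrite /gam; apply: (@clamp_ge1 R); lra. Qed.

Lemma gam0 x : kap x <= 1 / 4 -> gam x = 0.
Proof. move=> h; rewrite /gam; apply: (@clamp_le0 R); lra. Qed.

Definition sig (x : X) (t : I) : I := clamp (Num.min 1 (set_val t / phi x) * gam x).

Lemma sig0 x t : set_val t = 0 -> set_val (sig x t) = 0.
Proof.
by move=> t0; rewrite /sig t0 mul0r (min_idPr ler01) mul0r clamp_le0.
Qed.

Lemma sig1 x t : ~ A x -> phi x < set_val t -> set_val (sig x t) = 1.
Proof.
move=> nA h; have p1 : phi x < 1 by apply: (lt_le_trans h); exact: valI1.
rewrite /sig gam1 ?phi_lt1 // mulr1 (min_idPl _) ?clamp_ge1 //.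
by rewrite ler_pdivlMr ?phi_pos // mul1r ltW.
Qed.

Lemma sig_small x t : kap x <= 1 / 4 -> set_val (sig x t) = 0.
Proof. by move=> h; rewrite /sig gam0 // mulr0 clamp_le0. Qed.

Lemma sig_cont x t : ~ A x -> {for (x, t), continuous (fun p : X * I => sig p.1 p.2)}.
Proof.
move=> nA; rewrite /sig.
apply: (@continuous_comp _ _ _ (fun p : X * I => Num.min 1 (set_val p.2 / phi p.1) * gam p.1) clamp); last exact: cont_clamp.
apply: (@rc_mul R _ (fun p : X * I => Num.min 1 (set_val p.2 / phi p.1)) (fun p => gam p.1)).
  apply: (@rc_min R _ (fun _ => 1) (fun p : X * I => set_val p.2 / phi p.1)); first exact: rc_cst.
  apply: (@rc_mul R _ (fun p : X * I => set_val p.2) (fun p => (phi p.1)^-1)).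
    apply: (@continuous_comp _ _ _ snd set_val); [exact: cont_snd|exact: cont_val].
  apply: (@rc_inv R _ (fun p : X * I => phi p.1)); first by rewrite /= gt_eqF // phi_pos.
  apply: (@continuous_comp _ _ _ fst phi); [exact: cont_fst|exact: phi_cont].
apply: (@continuous_comp _ _ _ fst gam); [exact: cont_fst|exact: gam_cont].
Qed.

Definition P (x : X) (s : I) : X :=
  if set_val s <= 1 / 2 then (lam (ez x) (clamp (2 * set_val s))).1
  else (lam (ez x) (clamp (2 - 2 * set_val s))).2.

Lemma P_0 x s : set_val s = 0 -> P x s = x.
Proof.
move=> s0; rewrite /P s0 ifT; last by rewrite divr_ge0 // ler01.
by rewrite mulr0 lam0 // clamp_le0.
Qed.

Lemma P_A a s : A a -> P a s = a.
Proof. by move=> Aa; rewrite /P ez_diag //; case: ifP => _; rewrite lamd. Qed.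

Lemma P_1 x s : set_val s = 1 -> P x s = rr x.
Proof.
move=> s1; rewrite /P s1 ifF; last by apply/negbTE; rewrite -ltNge ltr_pdivrMr // mul1r ltr1n.
by rewrite mulr1 subrr lam0 // clamp_le0.
Qed.

Lemma P_fib x s : pX (P x s) = pX x.
Proof.
rewrite /P; case: ifP => _; first by have [-> _] := lamF (ez x) (clamp (2 * set_val s)).
by have [_ ->] := lamF (ez x) (clamp (2 - 2 * set_val s)).
Qed.

Lemma P_cont x s : V x -> 0 < u x -> {for (x, s), continuous (fun p : X * I => P p.1 p.2)}.
Proof.
move=> Vx ux; rewrite /P.
have cz : {for (x, s), continuous (fun p : X * I => ez p.1)}.
  apply: (@continuous_comp _ _ _ fst ez); [exact: cont_fst|exact: ez_cont].
have cs : {for (x, s), continuous (fun p : X * I => set_val p.2)}.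
  apply: (@continuous_comp _ _ _ snd set_val); [exact: cont_snd|exact: cont_val].
refine (@cont_if R (X * I)%type X (fun p => set_val p.2)
   (fun p => (lam (ez p.1) (clamp (2 * set_val p.2))).1)
   (fun p => (lam (ez p.1) (clamp (2 - 2 * set_val p.2))).2) (x, s) (1 / 2) cs _ _ _).
- apply: (@continuous_comp _ _ _ (fun p : X * I => lam (ez p.1) (clamp (2 * set_val p.2))) fst); last exact: cont_fst.
  apply: lamc => //.
  apply: (@continuous_comp _ _ _ (fun p : X * I => 2 * set_val p.2) clamp); last exact: cont_clamp.
  apply: (@rc_mul R _ (fun _ => 2) (fun p : X * I => set_val p.2)) => //; exact: rc_cst.
- apply: (@continuous_comp _ _ _ (fun p : X * I => lam (ez p.1) (clamp (2 - 2 * set_val p.2))) snd); last exact: cont_snd.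
  apply: lamc => //.
  apply: (@continuous_comp _ _ _ (fun p : X * I => 2 - 2 * set_val p.2) clamp); last exact: cont_clamp.
  apply: (@rc_sub R _ (fun _ => 2) (fun p : X * I => 2 * set_val p.2)); first exact: rc_cst.
  apply: (@rc_mul R _ (fun _ => 2) (fun p : X * I => set_val p.2)) => //; exact: rc_cst.
- move=> /= sh; rewrite sh.
  have -> : 2 * (1 / 2) = 1 :> R by field.
  have -> : 2 - 1 = 1 :> R by field.
  by apply: lamD.
Qed.

Definition D (x : X) (t : I) : X := P x (sig x t).

Lemma D_0 x t : set_val t = 0 -> D x t = x.
Proof. by move=> t0; rewrite /D P_0 // sig0. Qed.

Lemma D_A a t : A a -> D a t = a.
Proof. by move=> Aa; rewrite /D P_A. Qed.

Lemma D_fib x t : pX (D x t) = pX x.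
Proof. exact: P_fib. Qed.

Lemma D_inA x t : phi x < set_val t -> A (D x t).
Proof.
move=> h; have [Ax|nA] := pselect (A x); first by rewrite D_A.
have p1 : phi x < 1 by apply: (lt_le_trans h); exact: valI1.
have k := phi_lt1 p1.
have [Vx _ _] : [/\ V x, 0 < u x & fv x < 1 / 2].
  by apply: kap_pos; apply: lt_trans k; rewrite divr_gt0.
by rewrite /D P_1 ?sig1 //; apply: rr_A.
Qed.

Lemma D_cont : continuous (fun p : X * I => D p.1 p.2).
Proof.
case=> x t.
have [Ax|nA] := pselect (A x).
  have Vx : V x by rewrite /= Ax ltr01.
  have ux : 0 < u x by rewrite u_A.
  move=> N; rewrite /= D_A // => nN.
  have := tube P x x (fun s => P_A s Ax) (fun s => P_cont (s:=s) Vx ux) N nN.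
  move=> h1; have h2 := @cont_fst X I (x, t) _ h1.
  have h3 : nbhs (x, t) [set p : X * I | forall s, N (P p.1 s)] := h2.
  apply: (@filterS _ (nbhs (x, t)) _ _ _ _ h3) => -[y s] /= h; exact: h.
have [ks|kb] := ltP (kap x) (1 / 4).
  apply: (@cont_loc _ _ fst _ (x, t)); last exact: cont_fst.
  have := near_lt (@kap_cont x) ks.
  move=> h1; have h2 := @cont_fst X I (x, t) _ h1.
  have h3 : nbhs (x, t) [set p : X * I | kap p.1 < 1 / 4] := h2.
  apply: (@filterS _ (nbhs (x, t)) _ _ _ _ h3) => -[y s] /= h.
  by rewrite /D P_0 // sig_small // ltW.
have [Vx ux _] : [/\ V x, 0 < u x & fv x < 1 / 2].
  by apply: kap_pos; apply: lt_le_trans kb; rewrite divr_gt0.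
apply: (@continuous_comp _ _ _ (fun p : X * I => (p.1, sig p.1 p.2)) (fun p : X * I => P p.1 p.2)).
  apply: cont_pair; first exact: cont_fst.
  exact: sig_cont.
exact: P_cont.
Qed.

Context (Y : topologicalType) (pY : Y -> B) (g : X -> Y) (h : set_type A * I -> Y)
  (cg : continuous g) (ch : continuous h)
  (gF : forall x, pY (g x) = pX x)
  (hF : forall a t, pY (h (a, t)) = pX (set_val a))
  (comp : forall a t, set_val t = 0 -> h (a, t) = g (set_val a)).

Definition Tset (q : X * I) : Prop := set_val q.2 = 0 \/ A q.1.

Definition Gam (q : X * I) : Y :=
  match pselect (A q.1 /\ 0 < set_val q.2) with
  | left hq => h (exist _ q.1 (mem_set (proj1 hq)), q.2)
  | right _ => g q.1
  end.

Lemma Gam_h (a : set_type A) t : Gam (set_val a, t) = h (a, t).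
Proof.
rewrite /Gam; case: pselect => [hq|nq].
  congr (h (_, _)); apply: eq_sig_hprop; first by move=> *; exact: Prop_irrelevance.
  by [].
have Aa : A (set_val a) := set_valP a.
have t0 : set_val t = 0.
  have := valI0 t; rewrite le_eqVlt => /orP [/eqP <- //|ht]; exfalso; exact: nq.
by rewrite comp.
Qed.

Lemma Gam_g x t : set_val t = 0 -> Gam (x, t) = g x.
Proof.
move=> t0; rewrite /Gam; case: pselect => [hq|] //; exfalso.
by case: hq => _; rewrite /= t0 ltxx.
Qed.

Lemma Gam_cont q0 : Tset q0 -> forall N, nbhs (Gam q0) N ->
  \forall q \near q0, Tset q -> N (Gam q).
Proof.
case: q0 => y0 s0 T0 N nN.
have [Ay|nAy] := pselect (A y0).
  pose a0 : set_type A := exist _ y0 (mem_set Ay).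
  have e0 : Gam (y0, s0) = h (a0, s0) := Gam_h a0 s0.
  rewrite e0 in nN.
  have := ch nN.
  case/nbhs_prod_split => W1 [W2 [n1 n2 sub]].
  case: (@nbhs_sub_val X A a0 W1 n1) => O [oO Oy Osub].
  have nO : nbhs y0 O by apply: open_nbhs_nbhs; split.
  have [s00|s0pos] : set_val s0 = 0 \/ 0 < set_val s0.
    by case/andP: (valI s0); rewrite le_eqVlt => /orP [/eqP <-|->]; [left|right].
  - have ng : nbhs y0 (g @^-1` N).
      by apply: cg; rewrite -(comp a0 s00).
    have nOg : nbhs y0 (O `&` g @^-1` N) by apply: filterI.
    have key := @nbhs_prod_mk X I (y0, s0) _ _ nOg n2.
    move: key; apply: filterS => -[y s] /= [[Oy' gy] Ws] _.
    rewrite /Gam; case: pselect => [hq|_] //=.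
    by apply: sub => //; apply: Osub.
  - have npos : nbhs s0 [set s : I | 0 < set_val s].
      exact: (near_gt (@cont_val _ _ s0) s0pos).
    have n2p : nbhs s0 (W2 `&` [set s : I | 0 < set_val s]) by apply: filterI.
    have key := @nbhs_prod_mk X I (y0, s0) _ _ nO n2p.
    move: key; apply: filterS => -[y s] /= [Oy' [Ws sp]] Tq.
    rewrite /Gam; case: pselect => [hq|nq].
      by apply: sub => //; apply: Osub.
    exfalso; case: Tq => [e|Ay']; first by rewrite /= e ltxx in sp.
    by apply: nq; split.
have s00 : set_val s0 = 0 by case: T0.
rewrite Gam_g // in nN.
have ng : nbhs y0 (g @^-1` N) by apply: cg.
have nC : nbhs y0 (~` A).
  by apply: open_nbhs_nbhs; split => //; apply: closed_openC; exact: closedA.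
have nCg : nbhs y0 (~` A `&` g @^-1` N) by apply: filterI.
have nT : nbhs s0 [set: I] by apply: filterT.
have key := @nbhs_prod_mk X I (y0, s0) _ _ nCg nT.
move: key; apply: filterS => -[y s] /= [[nAy' gy] _] _.
rewrite /Gam; case: pselect => [[hq _]|_] //=.
Qed.

Definition rho (p : X * I) : X * I := (D p.1 p.2, clamp (set_val p.2 - phi p.1)).

Lemma rho_T p : Tset (rho p).
Proof.
rewrite /Tset /rho /=.
have [e|ne] := eqVneq (set_val (clamp (set_val p.2 - phi p.1))) 0; first by left.
right; apply: D_inA.
have : 0 < set_val (clamp (set_val p.2 - phi p.1)).
  by rewrite lt_def ne valI0.
by move/clamp_pos; rewrite subr_gt0.
Qed.

Lemma rho_cont : continuous rho.
Proof.
move=> p; apply: (@cont_pair _ _ _ (fun p : X * I => D p.1 p.2) (fun p : X * I => clamp (set_val p.2 - phi p.1)) p); first exact: D_cont.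
apply: (@continuous_comp _ _ _ (fun p : X * I => set_val p.2 - phi p.1) clamp); last exact: cont_clamp.
apply: (@rc_sub R _ (fun p : X * I => set_val p.2) (fun p : X * I => phi p.1)).
  apply: (@continuous_comp _ _ _ snd set_val); [exact: cont_snd|exact: cont_val].
apply: (@continuous_comp _ _ _ fst phi); [exact: cont_fst|exact: phi_cont].
Qed.

Definition Hfin (p : X * I) : Y := Gam (rho p).

Lemma Hfin_cont : continuous Hfin.
Proof.
move=> p N nN.
have := Gam_cont (rho_T p) nN.
move=> h1; have h2 := @rho_cont p _ h1.
have h3 : nbhs p [set q | Tset (rho q) -> N (Gam (rho q))] := h2.
apply: (@filterS _ (nbhs p) _ _ _ _ h3) => q /= hq; apply: hq; exact: rho_T.
Qed.

Lemma Hfin_0 x t : set_val t = 0 -> Hfin (x, t) = g x.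
Proof.
move=> t0; rewrite /Hfin /rho /= D_0 // Gam_g // t0 clamp_le0 //.
by rewrite sub0r oppr_le0 phi_ge0.
Qed.

Lemma Hfin_A (a : set_type A) t : Hfin (set_val a, t) = h (a, t).
Proof.
rewrite /Hfin /rho /= D_A; last exact: set_valP.
rewrite phi_A; last exact: set_valP.
by rewrite subr0 clamp_val Gam_h.
Qed.

Lemma Hfin_fib x t : pY (Hfin (x, t)) = pX x.
Proof.
rewrite /Hfin /Gam; case: pselect => [hq|_].
  by rewrite hF /= D_fib.
by rewrite gF /= D_fib.
Qed.

Lemma hep_final : exists H : X * I -> Y,
  [/\ fibrewise_homotopy pX pY H,
      (forall x t, set_val t = 0 -> H (x, t) = g x) &
      (forall a t, H (set_val a, t) = h (a, t))].
Proof.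
exists Hfin; split.
- by split; [exact: Hfin_cont|move=> x t; exact: Hfin_fib].
- by move=> x t; exact: Hfin_0.
- by move=> a t; exact: Hfin_A.
Qed.
End main.

Unset Implicit Arguments. Set Strict Implicit.
Theorem proposition4p6 (R : realType) (B X : topologicalType) (pX : X -> B)
  (cpX : continuous pX) (hLEC : fibrewise_LEC R pX)
  (f : X -> set_type (@unit_interval R)) (cf : continuous f)
  (hret : fibrewise_retract pX [set x | set_val (f x) = 0]
                               [set x | set_val (f x) < 1]) :
  closed_fibrewise_cofibred_pair R pX [set x | set_val (f x) = 0].
Proof.
have [lam [gap [clam cgap lamD lamF [lam0 lamd gapd]]]] := LEC_data pX cpX hLEC.
case: hret => _ [r [cr rF rA]].
split.
  split; first exact: cont_val.
    by move=> a b e; apply: eq_sig_hprop; first by move=> *; exact: Prop_irrelevance.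
  move=> C cC.
  have : open (~` C) by rewrite openC.
  case=> O oO eO.
  have -> : set_val @` C = [set x | set_val (f x) = 0] `&` ~` O.
    apply/seteqP; split.
      move=> x [c Cc <-]; split; first exact: set_valP.
      move=> Ox; have : (~` C) c by rewrite -eO.
      by apply.
    move=> x [Ax nOx]; exists (exist _ x (mem_set Ax)) => //.
    apply: contrapT => nC.
    have : (set_val @^-1` O) (exist _ x (mem_set Ax)) by rewrite eO.
    exact: nOx.
  apply: closedI; first exact: closedA.
  exact: open_closedC.
split; first exact: cont_val.
  by [].
move=> Y pY cpY g h cg fg [ch fh] comp.
exact: (hep_final cf cr rF rA clam cgap lamD lamF lam0 lamd gapd cg ch fg fh comp).
Qed.
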